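(* Let $(\mathcal X,\rho)$ be a metric space, $\{x_i^n:1\le i\le n,\ n\ge1\}\subset\mathcal X$, and $A_n=\{x_i^n:1\le i\le n\}$ (counted with indices). Assume $\hat R_n=\frac1n\sum_{i=1}^n\delta_{x_i^n}$ converges weakly to a probability measure $R$ whose support $\mathcal Y$ satisfies $R(\mathcal Y)=1$. Then there exist subsets $B_n\subset A_n$, and $C_n=A_n\setminus B_n$, such that: (1) $\mathrm{card}(B_n)/n\to1$; (2) $\frac1{\mathrm{card}(B_n)}\sum_{x_i^n\in B_n}\delta_{x_i^n}\to R$ weakly; (3) $\sup\{\rho(x,\mathcal Y):x\in B_n\}\to0$ as $n\to\infty$. In particular $\mathrm{card}(C_n)/n\to0$. *)

(* Defs.v *)
From HB Require Import structures.
From mathcomp Require Import all_boot all_order all_algebra.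
From mathcomp Require Import all_classical all_reals all_analysis.
Set Implicit Arguments. Unset Strict Implicit. Unset Printing Implicit Defensive.
Import Order.TTheory GRing.Theory Num.Theory.
Import numFieldNormedType.Exports.
Local Open Scope classical_set_scope.
Local Open Scope ring_scope.

#[short(type="pointedMetricType")]
HB.structure Definition PointedMetric (K : numDomainType) :=
  { M of Pointed M & Metric K M }.

Definition borel (K : realType) (X : pointedMetricType K) :=
  g_sigma_algebraType (@open X).

Section defs.
Context {K : realType} {X : pointedMetricType K}.

Definition emp_measure (n : nat) (x : nat -> X) (S : {set 'I_n})
  : {measure set (borel X) -> \bar K} :=
  mscale (#|S|%:R^-1)%:nng
    (msum (fun k => if k \in [seq val i | i in S]
                    then (dirac (x k : borel X) : {measure set (borel X) -> \bar K})
                    else mzero) n).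

Definition weak_cvg (mu : nat -> {measure set (borel X) -> \bar K})
  (P : {measure set (borel X) -> \bar K}) : Prop :=
  forall f : X -> K, continuous f -> (exists M : K, forall x, `|f x| <= M) ->
    (fun n => (\int[mu n]_x (f x)%:E)%E) @ \oo --> (\int[P]_x (f x)%:E)%E.

Definition msupport (P : {measure set (borel X) -> \bar K}) : set X :=
  [set y | forall r : K, 0 < r -> (0 < P (ball y r : set (borel X)))%E].

Definition dist_to (x : X) (Y : set X) : K := inf [set mdist x y | y in Y].

End defs.

(* Main.v *)
Require Import Defs.
From HB Require Import structures.
From mathcomp Require Import all_boot all_order all_algebra.
From mathcomp Require Import all_classical all_reals all_analysis.
From mathcomp Require Import measurable_realfun.
From mathcomp Require Import ring lra.
Import Order.TTheory GRing.Theory Num.Theory.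
Import numFieldNormedType.Exports.
Local Open Scope classical_set_scope.
Local Open Scope ring_scope.

Section S.
Context {K : realType} {X : pointedMetricType K}.

Lemma cont_meas (f : X -> K) : continuous f -> measurable_fun (setT : set (borel X)) f.
Proof.
move=> cf; apply: (measurability _ (RGenOpens.measurableE K)).
move=> _ [_ [a [b ->]] <-]; rewrite setTI; apply: sub_sigma_algebra.
move: cf => /continuousP; apply; exact: interval_open.
Qed.

Lemma open_meas (A : set X) : open A -> measurable (A : set (borel X)).
Proof. by move=> oA; apply: sub_sigma_algebra. Qed.

Lemma int_emp_ge0 n (y : nat -> X) (S : {set 'I_n}) (f : X -> \bar K) :
  (forall z, (0 <= f z)%E) -> measurable_fun (setT : set (borel X)) f ->
  (\int[emp_measure y S]_z f z = (#|S|%:R^-1)%:E * \sum_(i in S) f (y (val i)))%E.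
Proof.
move=> f0 mf; rewrite /emp_measure ge0_integral_mscale// ge0_integral_measure_sum//.
congr (_ * _)%E; rewrite [RHS]big_mkcond /=; apply: eq_bigr => k _.
have -> : (val k \in [seq val i | i in S]) = (k \in S).
  by rewrite mem_map ?mem_enum //; exact: val_inj.
case: ifP => _; last by rewrite integral_measure_zero.
by rewrite integral_dirac// diracE in_setT mul1e.
Qed.

Lemma int_emp n (y : nat -> X) (S : {set 'I_n}) (f : X -> K) :
  measurable_fun (setT : set (borel X)) f ->
  (\int[emp_measure y S]_z (f z)%:E = (#|S|%:R^-1 * \sum_(i in S) f (y (val i)))%:E)%E.
Proof.
move=> mf; rewrite integralE.
rewrite (_ : (fun z => (f z)%:E) = EFin \o f)// funerpos funerneg.
rewrite !int_emp_ge0 //; first last.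
- exact/measurable_EFinP/measurable_funrpos.
- by move=> z; rewrite lee_fin funrpos_ge0.
- exact/measurable_EFinP/measurable_funrneg.
- by move=> z; rewrite lee_fin funrneg_ge0.
rewrite !sumEFin -!EFinM -EFinB -mulrBr -sumrB; congr (_ * _)%:E.
by apply: eq_bigr => i _; rewrite /= -[in RHS](funrposBneg f).
Qed.

Lemma mball_open (z : X) (r : K) : open (ball z r).
Proof.
rewrite openE => w; rewrite ballEmdist /= => zw.
apply: (filterS _ (nbhsx_ballx w (r - mdist z w) _)); last by rewrite subr_gt0.
move=> v; rewrite !ballEmdist /= => wv.
by rewrite (le_lt_trans (metric_triangle z w v))// -ltrBrDl.
Qed.

Lemma open_of_nbhs (A : set X) : (forall z, A z -> nbhs z A) -> open A.
Proof. by move=> h; rewrite openE. Qed.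

Variable Y : set X.
Hypothesis Y0 : Y !=set0.

Lemma dist_ge0 z : 0 <= dist_to z Y.
Proof.
apply: lb_le_inf; first by case: Y0 => y Yy; exists (mdist z y), y.
by move=> _ [y _ <-]; exact: mdist_ge0.
Qed.

Lemma dist_le z y : Y y -> dist_to z Y <= mdist z y.
Proof.
move=> Yy; apply: ge_inf; last by exists y.
by exists 0 => _ [w _ <-]; exact: mdist_ge0.
Qed.

Lemma dist_mem y : Y y -> dist_to y Y = 0.
Proof.
by move=> Yy; apply/eqP; rewrite eq_le dist_ge0 andbT -(mdistxx y) dist_le.
Qed.

Lemma dist_lip1 z w : dist_to z Y <= dist_to w Y + mdist z w.
Proof.
rewrite -lerBlDr; apply: lb_le_inf; first by case: Y0 => y Yy; exists (mdist w y), y.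
move=> _ [y Yy <-]; rewrite lerBlDr (le_trans (dist_le z y Yy))//.
by rewrite addrC metric_triangle.
Qed.

Lemma dist_lip z w : `|dist_to z Y - dist_to w Y| <= mdist z w.
Proof.
have := dist_lip1 z w; have := dist_lip1 w z; rewrite (metric_sym w z).
by rewrite ler_norml => h1 h2; apply/andP; split; lra.
Qed.

Lemma max0_lip (A B : K) : `|Num.max 0 A - Num.max 0 B| <= `|A - B|.
Proof.
move: (ler_norm (A - B)) (ler_norm (B - A)); rewrite (distrC B A) => h1 h2.
by case: (leP 0 A) => ha; case: (leP 0 B) => hb; rewrite ler_norml;
  apply/andP; split; lra.
Qed.

Lemma lip_cont (f : X -> K) (L : K) : 0 < L ->
  (forall z w, `|f z - f w| <= L * mdist z w) -> continuous f.
Proof.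
move=> L0 fL z; apply/cvgrPdist_lt => e e0.
apply: (filterS _ (nbhsx_ballx z (e / L) _)); last by rewrite divr_gt0.
move=> w; rewrite ballEmdist /= => zw.
by rewrite (le_lt_trans (fL z w))// mulrC -ltr_pdivlMr.
Qed.

Definition gk (k : nat) (z : X) : K := Num.max 0 (1 - dist_to z Y * k.+1%:R).

Lemma gk_lip k z w : `|gk k z - gk k w| <= k.+1%:R * mdist z w.
Proof.
apply: (le_trans (max0_lip _ _)).
have -> : 1 - dist_to z Y * k.+1%:R - (1 - dist_to w Y * k.+1%:R) =
  (dist_to w Y - dist_to z Y) * k.+1%:R by ring.
rewrite normrM [`|k.+1%:R|]ger0_norm// mulrC distrC.
by rewrite ler_wpM2l// dist_lip.
Qed.

Lemma gk_cont k : continuous (gk k).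
Proof. by apply: (@lip_cont _ k.+1%:R) => //; exact: gk_lip. Qed.

Lemma gk_ge0 k z : 0 <= gk k z.
Proof. by rewrite /gk le_max lexx. Qed.

Lemma gk_le1 k z : gk k z <= 1.
Proof.
rewrite /gk ge_max ler01 /= lerBlDr lerDl mulr_ge0//; exact: dist_ge0.
Qed.

Lemma gk_mem k y : Y y -> gk k y = 1.
Proof. by move=> Yy; rewrite /gk dist_mem// mul0r subr0 max_r// ler01. Qed.

Lemma gk_le_ind k z : gk k z <= ((dist_to z Y < k.+1%:R^-1)%R : bool)%:R.
Proof.
case: ltP => h; first exact: gk_le1.
have h1 : 1 <= dist_to z Y * k.+1%:R.
  by rewrite -[leLHS](@mulVf _ k.+1%:R) ?pnatr_eq0// ler_pM2r.
have -> : (false%:R : K) = 0 by [].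
by rewrite /gk ge_max lexx /= subr_le0.
Qed.
End S.
Section T.
Context {K : realType} {X : pointedMetricType K} (P : probability (borel X) K).
Hypothesis HPY : P (msupport P) = 1%E.

Lemma msupport_open : open (~` msupport P).
Proof.
apply: open_of_nbhs => z /= nz.
have [r [r0 hr]] : exists r, 0 < r /\ ~ (0 < P (ball z r : set (borel X)))%E.
  apply: contrapT => hn; apply: nz => r r0; apply: contrapT => h; apply: hn.
  by exists r.
apply: (filterS _ (nbhsx_ballx z (r / 2) _)); last by rewrite divr_gt0.
move=> w zw /= hw; apply: hr.
apply: (lt_le_trans (hw (r / 2) _)); first by rewrite divr_gt0.
apply: le_measure; rewrite ?inE; try exact: open_meas (mball_open _ _).
by move=> v wv; have := ball_triangle zw wv; rewrite -splitr.
Qed.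

Lemma msupport_meas : measurable (msupport P : set (borel X)).
Proof.
rewrite -[msupport P]setCK; apply: measurableC; apply: open_meas.
exact: msupport_open.
Qed.

Lemma msupport_n0 : msupport P !=set0.
Proof.
apply/set0P; apply/negP => /eqP h; move: HPY; rewrite h measure0 => /eqP.
by rewrite eq_sym onee_eq0.
Qed.

Lemma int_gk k : (1 <= \int[P]_z (gk (msupport P) k z)%:E)%E.
Proof.
have mg : measurable_fun (setT : set (borel X)) (EFin \o gk (msupport P) k).
  by apply/measurable_EFinP; apply: cont_meas; apply: gk_cont; exact: msupport_n0.
have h0 : forall z, setT z -> (0 <= (EFin \o gk (msupport P) k) z)%E.
  by move=> z _; rewrite /= lee_fin gk_ge0.
have h := @ge0_subset_integral _ _ _ P _ _ msupport_meas measurableT _ mg h0 (@subsetT _ _).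
apply: le_trans h.
have -> : (\int[P]_(x in msupport P) (EFin \o gk (msupport P) k) x =
    \int[P]_(x in msupport P) (cst 1%E) x)%E.
  by apply: eq_integral => z; rewrite inE => Yz /=; rewrite (@gk_mem _ _ (msupport P) msupport_n0 k z Yz).
rewrite (@integral_cst _ (borel X) _ P (msupport P) msupport_meas) mul1e.
by move/eqP: HPY; rewrite eq_le => /andP[_ h]; exact: h.
Qed.
End T.
Definition avg {K : realType} {X : pointedMetricType K} {n} (S : {set 'I_n})
  (f : X -> K) (y : nat -> X) : K := #|S|%:R^-1 * \sum_(i in S) f (y (val i)).

Section U.
Context {K : realType} {X : pointedMetricType K} (P : probability (borel X) K).
Variable x : nat -> nat -> X.
Hypothesis H : weak_cvg (fun n => emp_measure (x n) [set: 'I_n]) P.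

Lemma emp_lim f M : continuous f -> (forall z, `|f z| <= M) ->
  exists l, (\int[P]_z (f z)%:E = l%:E)%E /\
    (fun n => avg [set: 'I_n] f (x n)) @ \oo --> l.
Proof.
move=> cf fM; have mf := cont_meas f cf.
have Hf := H f cf (ex_intro _ M fM).
have fin : (\int[P]_z (f z)%:E)%E \is a fin_num.
  apply: integrable_fin_num; first by [].
  apply: (@measurable_bounded_integrable _ _ _ P f setT measurableT) => //=.
    by rewrite probability_setT ltry.
  exists M; split; first by rewrite num_real.
  by move=> N MN t _ /=; apply: le_trans (fM t) (ltW MN).
exists (fine (\int[P]_z (f z)%:E)%E); split; first by rewrite fineK.
move: Hf; rewrite -(fineK fin).
have -> : (fun n => \int[emp_measure (x n) [set: 'I_n]]_z (f z)%:E)%E =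
  (fun n => (avg [set: 'I_n] f (x n))%:E).
  by apply/funext => n; rewrite int_emp.
by move=> /fine_cvg.
Qed.

Hypothesis HPY : P (msupport P) = 1%E.

Definition Sk k n : {set 'I_n} :=
  [set i : 'I_n | dist_to (x n i) (msupport P) < k.+1%:R^-1].

Lemma count_ev k : exists N, forall n, (N <= n)%N ->
  1 - k.+1%:R^-1 < (#|Sk k n|%:R / n%:R : K).
Proof.
have Y0 := msupport_n0 P HPY.
have gb : forall z, `|gk (msupport P) k z| <= 1.
  by move=> z; rewrite ger0_norm ?gk_ge0 ?gk_le1.
have [l [hl cv]] := @emp_lim _ _ (gk_cont _ Y0 k) gb.
have l1 : 1 <= l by rewrite -lee_fin -hl; exact: (int_gk P HPY k).
have lk : 1 - k.+1%:R^-1 < l.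
  by apply: lt_le_trans l1; rewrite ltrBlDr ltrDl invr_gt0.
have [N _ HN] := cvgr_gt _ cv _ lk.
exists N.+1 => n Nn; apply: (lt_le_trans (HN n _)); first exact: ltnW.
rewrite /avg cardsT card_ord mulrC ler_wpM2r ?invr_ge0//.
rewrite -[#|_|%:R]/(1 *+ #|Sk k n|) -sumr_const [leRHS]big_mkcond [leLHS]big_mkcond /=.
apply: ler_sum => i _; rewrite !inE; case: ifP => h; first exact: gk_le1.
by have := @gk_le_ind _ _ _ Y0 k (x n i); rewrite h.
Qed.

End U.
Lemma key_bound {K : realType} (n m c SB SC M : K) : 0 < n -> n = m + c ->
  0 <= m -> 0 <= c -> `|SB| <= m * M -> `|SC| <= c * M ->
  `|n^-1 * (SB + SC) - m^-1 * SB| <= 2 * M * (c / n).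
Proof.
move=> n0 hn m0 c0 hB hC.
have cn : c / n = c * n^-1 by [].
have hC' : `|SC| / n <= M * (c / n).
  have -> : M * (c / n) = c * M / n by rewrite mulrA (mulrC M).
  by rewrite ler_pM2r ?invr_gt0.
have [m00|mpos] := eqVneq m 0.
  have SB0 : SB = 0 by apply/normr0_eq0/eqP; rewrite eq_le normr_ge0 andbT -(mul0r M) -m00.
  rewrite SB0 mulr0 subr0 add0r normrM ger0_norm ?invr_ge0 ?(ltW n0)// mulrC.
  have M0 : 0 <= M.
    have : 0 < c by move: n0; rewrite hn m00 add0r.
    by move=> cp; rewrite -(pmulr_rge0 _ cp) (le_trans (normr_ge0 _) hC).
  apply: (le_trans hC'); rewrite -mulrA ler_peMl// ?mulr_ge0 ?invr_ge0 ?divr_ge0 ?(ltW n0)//.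
  by rewrite ler1n.
have mp : 0 < m by rewrite lt_neqAle eq_sym mpos.
have M0 : 0 <= M by rewrite -(pmulr_rge0 _ mp) (le_trans (normr_ge0 _) hB).
have -> : n^-1 * (SB + SC) - m^-1 * SB = n^-1 * SC - (c / n) * (m^-1 * SB).
  by rewrite hn; field; rewrite mpos -hn gt_eqF.
apply: (le_trans (ler_normB _ _)).
have hB' : `|m^-1 * SB| <= M.
  by rewrite normrM ger0_norm ?invr_ge0 ?(ltW mp)// mulrC ler_pdivrMr// mulrC.
have cn0 : 0 <= c / n by rewrite divr_ge0 ?(ltW n0).
have ni0 : 0 <= n^-1 by rewrite invr_ge0 ltW.
rewrite (normrM (c / n)) (ger0_norm cn0) normrM (ger0_norm ni0).
rewrite (mulrC n^-1) -/(`|SC| / n).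
have : c / n * `|m^-1 * SB| <= c / n * M.
  by apply: ler_wpM2l => //; rewrite divr_ge0 ?(ltW n0).
lra.
Qed.

Lemma sum_bound {K : realType} {X : pointedMetricType K} n (S : {set 'I_n})
   (f : X -> K) (y : nat -> X) M :
  (forall z, `|f z| <= M) -> `|\sum_(i in S) f (y (val i))| <= #|S|%:R * M.
Proof.
move=> fM; apply: (le_trans (ler_norm_sum _ _ _)).
rewrite mulr_natl -sumr_const; apply: ler_sum => i _; exact: fM.
Qed.

Lemma small_inv {K : realType} (e : K) : 0 < e -> exists k : nat, k.+1%:R^-1 < e.
Proof.
move=> e0; exists (Num.truncn (e^-1)).
rewrite -[ltRHS]invrK ltf_pV2 ?posrE ?invr_gt0 ?ltr0n//.
exact: truncnS_gt.
Qed.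

Section V.
Context {K : realType} {X : pointedMetricType K} (P : probability (borel X) K).
Variable x : nat -> nat -> X.
Hypothesis H : weak_cvg (fun n => emp_measure (x n) [set: 'I_n]) P.
Hypothesis HPY : P (msupport P) = 1%E.

Lemma select : exists B : forall n, {set 'I_n}, forall k, exists N', forall n,
  (N' <= n)%N -> [/\ (0 < n)%N, 1 - k.+1%:R^-1 < (#|B n|%:R / n%:R : K) &
    forall i, i \in B n -> dist_to (x n i) (msupport P) < k.+1%:R^-1].
Proof.
have [N HN] := choice (count_ev P x H HPY).
pose J n := (\max_(j < n.+1 | N j <= n) (j : nat))%N.
have JN n : (N 0 <= n)%N -> (N (J n) <= n)%N.
  move=> h; rewrite /J (bigop.bigmax_eq_arg ord0) //.
  by case: arg_maxnP => //= i Pi _.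
have Jk n k : (k <= n)%N -> (N k <= n)%N -> (k <= J n)%N.
  move=> kn Nk; rewrite -ltnS in kn.
  exact: (leq_bigmax_cond (Ordinal kn) Nk).
exists (fun n => Sk P x (J n) n) => k.
exists (maxn 1 (maxn (N 0) (maxn (N k) k))) => n.
rewrite !geq_max => /and4P[n1 hN0 hNk hk]; split => //.
- apply: le_lt_trans (HN (J n) n (JN n hN0)).
  rewrite lerD2l lerN2 lef_pV2 ?posrE ?ltr0n// ler_nat ltnS.
  exact: Jk.
- move=> i; rewrite inE => /lt_le_trans; apply.
  rewrite lef_pV2 ?posrE ?ltr0n// ler_nat ltnS.
  exact: Jk.
Qed.
End V.

Theorem proposition3p1 (K : realType) (X : pointedMetricType K)
  (x : nat -> nat -> X) (P : probability (borel X) K) :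
  weak_cvg (fun n => emp_measure (x n) [set: 'I_n]) P ->
  P (msupport P) = 1%E ->
  exists B : forall n, {set 'I_n},
    [/\ (fun n => #|B n|%:R / n%:R : K) @ \oo --> (1 : K),
        weak_cvg (fun n => emp_measure (x n) (B n)) P,
        (fun n => sup [set dist_to (x n (val i)) (msupport P) | i in [set i | i \in B n]])
          @ \oo --> (0 : K)
      & (fun n => #|~: B n|%:R / n%:R : K) @ \oo --> (0 : K)].
Proof.
move=> H HPY.
have Y0 := msupport_n0 P HPY.
have [B hB] := select P x H HPY.
have frac_le1 n : (0 < n)%N -> (#|B n|%:R / n%:R : K) <= 1.
  move=> n0; rewrite ler_pdivrMr ?ltr0n// mul1r ler_nat.
  by rewrite -[X in (_ <= X)%N](card_ord n) max_card.
have fracC n : (0 < n)%N -> (#|~: B n|%:R / n%:R : K) = 1 - #|B n|%:R / n%:R.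
  move=> n0; have hn : (n%:R : K) = #|B n|%:R + #|~: B n|%:R.
    by rewrite -natrD cardsC card_ord.
  rewrite hn; field; rewrite -hn pnatr_eq0 -lt0n//.
have cvgC : (fun n => #|~: B n|%:R / n%:R : K) @ \oo --> (0 : K).
  apply/cvgrPdist_lt => e e0; have [k hk] := small_inv _ e0; have [N' hN'] := hB k.
  exists N' => // n /= Nn; have [n0 h1 _] := hN' n Nn.
  rewrite sub0r normrN fracC // ger0_norm ?subr_ge0 ?frac_le1 //.
  move: h1 hk; set t := k.+1%:R^-1; set u := #|B n|%:R / n%:R; lra.
exists B; split.
- apply/cvgrPdist_lt => e e0; have [k hk] := small_inv _ e0; have [N' hN'] := hB k.
  exists N' => // n /= Nn; have [n0 h1 _] := hN' n Nn.
  have fl := frac_le1 n n0; rewrite ger0_norm ?subr_ge0 //.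
  move: fl h1 hk; set t := k.+1%:R^-1; set u := #|B n|%:R / n%:R. lra.
- move=> f cf [M fM].
  have [l [hl cv]] := emp_lim P x H f M cf fM.
  rewrite hl; have mf := cont_meas f cf.
  have -> : (fun n => \int[emp_measure (x n) (B n)]_z (f z)%:E)%E =
      (fun n => (avg (B n) f (x n))%:E).
    by apply/funext => n; rewrite int_emp.
  apply: cvg_EFin; first exact: nearW.
  have M0 : 0 <= M by apply: le_trans (normr_ge0 _) (fM point).
  apply/cvgrPdist_lt => e e0.
  have e2 : 0 < e / 2 by rewrite divr_gt0.
  have e3 : 0 < e / (4 * (M + 1)) by rewrite divr_gt0 // mulr_gt0 // ltr_pwDr.
  have [N1 _ h1] := cvgr_dist_lt _ _ cv _ e2.
  have [N2 _ h2] := cvgr_dist_lt _ _ cvgC _ e3.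
  exists (maxn 1 (maxn N1 N2)) => // n /=; rewrite !geq_max => /and3P[n0 n1 n2].
  have a1 := h1 n n1; have a2 := h2 n n2; rewrite /= sub0r normrN in a2.
  have hsplit : avg [set: 'I_n] f (x n) = n%:R^-1 *
      (\sum_(i in B n) f (x n (val i)) + \sum_(i in ~: B n) f (x n (val i))).
    by rewrite /avg (big_setID (B n)) finset.setTI finset.setTD cardsT card_ord.
  have kb : `|avg [set: 'I_n] f (x n) - avg (B n) f (x n)| <=
      2 * M * (#|~: B n|%:R / n%:R).
    rewrite hsplit /avg; apply: key_bound.
    - by rewrite ltr0n.
    - by rewrite -natrD cardsC card_ord.
    - exact: ler0n.
    - exact: ler0n.
    - exact: (@sum_bound _ _ n (B n) f (x n) M fM).
    - exact: (@sum_bound _ _ n (~: B n) f (x n) M fM).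
  have fc0 : 0 <= #|~: B n|%:R / n%:R :> K by rewrite divr_ge0.
  rewrite ger0_norm // in a2.
  have hm : 2 * M * (#|~: B n|%:R / n%:R) <= e / 2.
    apply: (@le_trans _ _ (2 * (M + 1) * (e / (4 * (M + 1))))).
      apply: ler_pM => //; first by rewrite mulr_ge0.
        by rewrite ler_pM2l // lerDl.
      exact: ltW.
    rewrite le_eqVlt; apply/orP; left; apply/eqP; field.
    by rewrite gt_eqF // ltr_pwDr.
  have -> : l - avg (B n) f (x n) = (l - avg [set: 'I_n] f (x n)) +
      (avg [set: 'I_n] f (x n) - avg (B n) f (x n)) by ring.
  apply: le_lt_trans (ler_normD _ _) _.
  move: a1 kb hm; set u := `|_ - _|; set v := `|_ - _|; set w := 2 * M * _; lra.
- apply/cvgrPdist_lt => e e0; have [k hk] := small_inv _ e0; have [N' hN'] := hB k.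
  exists N' => // n /= Nn; have [n0 _ hd] := hN' n Nn.
  set E := [set _ | _ in _].
  have Eub : forall z, E z -> 0 <= z /\ z < k.+1%:R^-1.
    by move=> _ [i Bi <-]; split; [exact: (@dist_ge0 _ _ _ Y0) | exact: hd].
  have [->|/set0P [z Ez]] := eqVneq E set0; first by rewrite sup0 subr0 normr0.
  have hs : has_ubound E by exists k.+1%:R^-1 => w /Eub [_ /ltW].
  have s0 : 0 <= sup E by apply: le_trans (proj1 (Eub z Ez)) (ub_le_sup hs Ez).
  have s1 : sup E <= k.+1%:R^-1.
    by apply: ge_sup; [exists z | move=> w /Eub [_ /ltW]].
  rewrite sub0r normrN ger0_norm //.
  move: s1 hk; set t := k.+1%:R^-1; lra.
- apply/cvgrPdist_lt => e e0; have [k hk] := small_inv _ e0; have [N' hN'] := hB k.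
  exists N' => // n /= Nn; have [n0 h1 _] := hN' n Nn.
  rewrite sub0r normrN fracC // ger0_norm ?subr_ge0 ?frac_le1 //.
  move: h1 hk; set t := k.+1%:R^-1; set u := #|B n|%:R / n%:R; lra.
Qed.
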